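(* Let $\beta\ge0$, $B>0$ and $\epsilon\in(0,1/5)$. There is a constant $C>0$ depending only on $\epsilon,\beta,B$ such that for all $n\ge C$ and all $a,b$ with $n^{-2\epsilon/5}<a<b\le B$, $$Z'_{a,b}:=\int_{\Gamma_{a,b}}e^{\beta n^{-1}S_4(f)}\,df\ \le\ \exp\Big(nL(a,b)+\frac{Cn^{4/5+\epsilon}}{b-a}\Big).$$
   Context: Let $V$ be a finite set with $n=|V|$ and $df$ Lebesgue measure on $\mathbb{C}^V\cong\mathbb{R}^{2n}$. For $f\in\mathbb{C}^V$ and $k\ge2$, $S_k(f)=\sum_{x\in V}|f_x|^k$. For $0<a<b$, $$\Gamma_{a,b}=\{f\in\mathbb{C}^V:\ a^2n^2(1-n^{-1/5})\le S_4(f)\le a^2n^2(1+n^{-1/5}),\ bn(1-n^{-1/5})\le S_2(f)\le bn(1+n^{-1/5})\}.$$ Define $L(a,b)=\beta a^2+\log(b-a)+\log\pi+1$. *)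

(* Defs.v *)
From Stdlib Require Import Reals Lra Lia.
Open Scope R_scope.

(* Points of R^m are represented as z : nat -> R, only coordinates 0..m-1 matter. *)

Fixpoint fsum (n : nat) (g : nat -> R) : R :=
  match n with
  | O => 0
  | S k => fsum k g + g k
  end.

Fixpoint fprod (n : nat) (g : nat -> R) : R :=
  match n with
  | O => 1
  | S k => fprod k g * g k
  end.

Record box := mkBox { lo : nat -> R; hi : nat -> R }.

Definition box_vol (m : nat) (Q : box) : R :=
  fprod m (fun i => Rmax 0 (hi Q i - lo Q i)).

Definition in_box (m : nat) (Q : box) (z : nat -> R) : Prop :=
  forall i, (i < m)%nat -> lo Q i <= z i <= hi Q i.

Definition lebesgue_outer_le (m : nat) (A : (nat -> R) -> Prop) (x : R) : Prop :=
  forall delta : R, delta > 0 ->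
    exists Q : nat -> box,
      (forall z, A z -> exists k, in_box m (Q k) z) /\
      (forall N : nat, fsum N (fun k => box_vol m (Q k)) <= x + delta).

(* C^V with V = {0,...,n-1}: f_x = z(2x) + i z(2x+1). *)
Definition cabs (z : nat -> R) (x : nat) : R :=
  sqrt (z (2 * x)%nat ^ 2 + z (2 * x + 1)%nat ^ 2).

Definition Sk (n k : nat) (z : nat -> R) : R := fsum n (fun x => cabs z x ^ k).

Definition Gamma (n : nat) (a b : R) (z : nat -> R) : Prop :=
  let N := INR n in
  let e := Rpower N (-(1/5)) in
  a ^ 2 * N ^ 2 * (1 - e) <= Sk n 4 z <= a ^ 2 * N ^ 2 * (1 + e) /\
  b * N * (1 - e) <= Sk n 2 z <= b * N * (1 + e).

Definition Lfun (beta a b : R) : R := beta * a ^ 2 + ln (b - a) + ln PI + 1.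

(* Subgraph in R^{2n+1} of  1_{Gamma_{a,b}}(f) exp(beta n^{-1} S_4(f)),
   last coordinate (index 2n) is the height. Its Lebesgue measure is Z'_{a,b}. *)
Definition Zsubgraph (beta : R) (n : nat) (a b : R) (w : nat -> R) : Prop :=
  Gamma n a b w /\
  0 <= w (2 * n)%nat <= exp (beta / INR n * Sk n 4 w).

(* Main.v *)
Require Import Defs.
From Stdlib Require Import Reals Lra Lia List ZArith IndefiniteDescription.
From Coquelicot Require Import Coquelicot.
Import ListNotations.
Open Scope R_scope.

Definition lsum (l : list R) : R := fold_right Rplus 0 l.

Lemma lsum_app l1 l2 : lsum (l1 ++ l2) = lsum l1 + lsum l2.
Proof. induction l1; simpl; [ring| rewrite IHl1; ring]. Qed.

Lemma lsum_map_le {T} (f g : T -> R) l :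
  (forall x, In x l -> f x <= g x) -> lsum (map f l) <= lsum (map g l).
Proof.
  induction l; simpl; intros H; [lra|].
  pose proof (H a (or_introl eq_refl)).
  assert (lsum (map f l) <= lsum (map g l)) by (apply IHl; auto). lra.
Qed.

Lemma lsum_map_ext {T} (f g : T -> R) l :
  (forall x, In x l -> f x = g x) -> lsum (map f l) = lsum (map g l).
Proof.
  intros H; apply Rle_antisym; apply lsum_map_le; intros x Hx; rewrite (H x Hx); lra.
Qed.

Lemma lsum_map_nonneg {T} (f : T -> R) l :
  (forall x, In x l -> 0 <= f x) -> 0 <= lsum (map f l).
Proof.
  induction l; simpl; intros H; [lra|].
  pose proof (H a (or_introl eq_refl)).
  assert (0 <= lsum (map f l)) by (apply IHl; auto). lra.
Qed.

Lemma lsum_map_scal {T} (c : R) (f : T -> R) l :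
  lsum (map (fun x => c * f x) l) = c * lsum (map f l).
Proof. induction l; simpl; [ring| rewrite IHl; ring]. Qed.

Lemma lsum_map_scal_r {T} (c : R) (f : T -> R) l :
  lsum (map (fun x => f x * c) l) = lsum (map f l) * c.
Proof. induction l; simpl; [ring| rewrite IHl; ring]. Qed.

Lemma lsum_flat_map {T U} (F : U -> R) (g : T -> list U) l :
  lsum (map F (flat_map g l)) = lsum (map (fun x => lsum (map F (g x))) l).
Proof. induction l; simpl; [reflexivity|]. rewrite map_app, lsum_app, IHl; reflexivity. Qed.

Lemma fsum_ext N f g : (forall i, (i < N)%nat -> f i = g i) -> fsum N f = fsum N g.
Proof. induction N; simpl; intros H; [reflexivity|]. rewrite IHN by (intros; apply H; lia). rewrite H by lia; reflexivity. Qed.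

Lemma fsum_le N f g : (forall i, (i < N)%nat -> f i <= g i) -> fsum N f <= fsum N g.
Proof. induction N; simpl; intros H; [lra|].
  assert (fsum N f <= fsum N g) by (apply IHN; intros; apply H; lia).
  pose proof (H N ltac:(lia)). lra. Qed.

Lemma fsum_nonneg N f : (forall i, (i < N)%nat -> 0 <= f i) -> 0 <= fsum N f.
Proof. intros H. replace 0 with (fsum N (fun _ => 0)).
  apply fsum_le; auto. induction N; simpl; auto. rewrite IHN; [ring|intros; apply H; lia]. Qed.

Lemma fsum_plus N f g : fsum N (fun i => f i + g i) = fsum N f + fsum N g.
Proof. induction N; simpl; [ring|rewrite IHN; ring]. Qed.

Lemma fsum_scal N c f : fsum N (fun i => c * f i) = c * fsum N f.
Proof. induction N; simpl; [ring|rewrite IHN; ring]. Qed.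

Lemma fsum_shift N g : fsum (S N) g = g 0%nat + fsum N (fun k => g (S k)).
Proof. induction N; [simpl; ring|]. change (fsum (S (S N)) g) with (fsum (S N) g + g (S N)).
  rewrite IHN. simpl. ring. Qed.

Lemma fsum_telescope N g : fsum N (fun i => g (S i) - g i) = g N - g 0%nat.
Proof. induction N; simpl; [ring|rewrite IHN; ring]. Qed.

Lemma lsum_seq f M : lsum (map f (seq 0 M)) = fsum M f.
Proof. induction M; [reflexivity|]. rewrite seq_S, map_app, lsum_app, IHM. simpl. ring. Qed.

Lemma fprod_ext N f g : (forall i, (i < N)%nat -> f i = g i) -> fprod N f = fprod N g.
Proof. induction N; simpl; intros H; [reflexivity|]. rewrite IHN by (intros; apply H; lia). rewrite H by lia; reflexivity. Qed.

Lemma fprod_nonneg N f : (forall i, (i < N)%nat -> 0 <= f i) -> 0 <= fprod N f.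
Proof. induction N; simpl; intros H; [lra|]. apply Rmult_le_pos; [apply IHN; intros; apply H; lia| apply H; lia]. Qed.

Lemma box_vol_nonneg m Q : 0 <= box_vol m Q.
Proof. unfold box_vol. apply fprod_nonneg. intros; apply Rmax_l. Qed.

Definition box0 : box := mkBox (fun _ => 0) (fun _ => 0).

Lemma box0_vol m : (1 <= m)%nat -> box_vol m box0 = 0.
Proof. intros Hm. destruct m; [lia|]. unfold box_vol; simpl.
  replace (Rmax 0 (0 - 0)) with 0. ring. unfold Rmax; destruct Rle_dec; lra. Qed.

Lemma fsum_nth_le (L : list R) : (forall x, In x L -> 0 <= x) ->
  forall N, fsum N (fun k => nth k L 0) <= lsum L.
Proof.
  induction L as [|a l IH]; intros H N.
  - replace (fsum N (fun k => nth k [] 0)) with 0; [simpl; lra|].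
    rewrite (fsum_ext N _ (fun _ => 0)) by (intros i _; destruct i; reflexivity).
    induction N; simpl; [reflexivity| rewrite <- IHN; ring].
  - destruct N.
    + simpl. pose proof (H a (or_introl eq_refl)).
      assert (0 <= lsum l). { clear IH. induction l as [|b l' IHl]; simpl; [lra|].
        pose proof (H b (or_intror (or_introl eq_refl))).
        assert (0 <= lsum l') by (apply IHl; intros y [Hy|Hy]; apply H; simpl; tauto). lra. }
      lra.
    + rewrite fsum_shift. simpl. pose proof (IH (fun x Hx => H x (or_intror Hx)) N). lra.
Qed.

Lemma outer_of_list m A L x : (1 <= m)%nat ->
  (forall z, A z -> exists Q, In Q L /\ in_box m Q z) ->
  lsum (map (box_vol m) L) <= x -> lebesgue_outer_le m A x.
Proof.
  intros Hm Hcov Hs delta Hd.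
  exists (fun k => nth k L box0). split.
  - intros z Hz. destruct (Hcov z Hz) as [Q [HQ Hin]].
    destruct (In_nth L Q box0 HQ) as [k [_ Hk]]. exists k. rewrite Hk; auto.
  - intros N. rewrite (fsum_ext N _ (fun k => nth k (map (box_vol m) L) 0)).
    + pose proof (fsum_nth_le (map (box_vol m) L)) as HH.
      assert (forall y, In y (map (box_vol m) L) -> 0 <= y).
      { intros y Hy. apply in_map_iff in Hy. destruct Hy as [q [<- _]]. apply box_vol_nonneg. }
      specialize (HH H N). lra.
    + intros i _. rewrite <- (box0_vol m Hm). rewrite map_nth. reflexivity.
Qed.

Definition G (t : R) : R := (t + sin t * cos t) / 2.

Lemma G_step a b : 0 <= a <= b -> b <= PI/2 ->
  (sin b - sin a) * cos b <= G b - G a <= (sin b - sin a) * cos a.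
Proof.
  intros Hab Hb.
  destruct (Req_dec a b) as [->|Hne]. { split; ring_simplify; lra. }
  assert (Hlt : a < b) by lra.
  pose proof PI_RGT_0.
  split.
  - destruct (MVT_cor2 (fun t => G t - (sin t - sin a) * cos t)
        (fun t => (sin t - sin a) * sin t) a b Hlt) as [c [Hc Hc2]].
    { intros c Hc. apply is_derive_Reals. unfold G. auto_derive; auto.
      pose proof (sin2_cos2 c). unfold Rsqr in *. nra. }
    assert (0 <= (sin c - sin a) * sin c).
    { apply Rmult_le_pos.
      - assert (sin a <= sin c) by (apply sin_incr_1; lra). lra.
      - apply sin_ge_0; lra. }
    assert (0 <= (sin c - sin a) * sin c * (b - a)) by (apply Rmult_le_pos; lra).
    lra.
  - destruct (MVT_cor2 (fun t => G t - sin t * cos a)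
        (fun t => cos t * (cos t - cos a)) a b Hlt) as [c [Hc Hc2]].
    { intros c Hc. apply is_derive_Reals. unfold G. auto_derive; auto.
      pose proof (sin2_cos2 c). unfold Rsqr in *. nra. }
    assert (cos c * (cos c - cos a) <= 0).
    { assert (0 <= cos c) by (apply cos_ge_0; lra).
      assert (cos c <= cos a) by (apply cos_decr_1; lra). nra. }
    assert (cos c * (cos c - cos a) * (b - a) <= 0).
    { apply Rmult_le_0_r; lra. }
    lra.
Qed.

Lemma divnn x y : 0 <= x -> 0 < y -> 0 <= x / y.
Proof. intros; unfold Rdiv; apply Rmult_le_pos; [lra| left; apply Rinv_0_lt_compat; lra]. Qed.
Lemma divle1 x y : 0 < y -> x <= y -> x / y <= 1.
Proof. intros. replace 1 with (y * / y) by (field; lra). unfold Rdiv.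
  apply Rmult_le_compat_r; [left; apply Rinv_0_lt_compat|]; lra. Qed.

Definition wq (rho y : R) : R := sqrt (rho - y * y).
Definition Fq (rho y : R) : R := rho * G (asin (Rmin y (sqrt rho) / sqrt rho)).

Lemma asin_nonneg x : 0 <= x <= 1 -> 0 <= asin x.
Proof. intros Hx. pose proof (asin_bound x). pose proof PI_RGT_0.
  apply sin_incr_0; try lra. rewrite sin_0, sin_asin; lra. Qed.

Lemma asin_mono x y : 0 <= x <= y -> y <= 1 -> asin x <= asin y.
Proof. intros. pose proof (asin_bound x). pose proof (asin_bound y).
  apply sin_incr_0; try lra. rewrite !sin_asin; lra. Qed.

Lemma wq_asin rho y : 0 < rho -> 0 <= y <= sqrt rho ->
  wq rho y = sqrt rho * cos (asin (y / sqrt rho)).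
Proof.
  intros Hr Hy. assert (Hs: 0 < sqrt rho) by (apply sqrt_lt_R0; lra).
  assert (0 <= y / sqrt rho <= 1).
  { split. apply divnn; lra. apply divle1; lra. }
  rewrite cos_asin by lra. unfold wq.
  rewrite <- sqrt_mult_alt by lra.
  f_equal. unfold Rsqr. pose proof (sqrt_sqrt rho ltac:(lra)).
  set (r := sqrt rho) in *. replace (y / r * (y / r)) with (y * y / (r * r)) by (field; lra).
  rewrite H0. field. lra.
Qed.

Lemma Fq_step_in rho y y' : 0 < rho -> 0 <= y <= y' -> y' <= sqrt rho ->
  (y' - y) * wq rho y' <= Fq rho y' - Fq rho y <= (y' - y) * wq rho y.
Proof.
  intros Hr Hy Hy'. set (r := sqrt rho) in *.
  assert (Hs: 0 < r) by (apply sqrt_lt_R0; lra).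
  assert (Hrr : r * r = rho) by (apply sqrt_sqrt; lra).
  unfold Fq. fold r. rewrite !Rmin_left by lra.
  rewrite !wq_asin by (fold r; lra). fold r.
  set (s := y / r). set (s' := y' / r).
  assert (Hs1 : 0 <= s <= s') by (unfold s, s'; split; [apply divnn; lra| apply Rmult_le_compat_r; [left; apply Rinv_0_lt_compat|]; lra]).
  assert (Hs2 : s' <= 1) by (unfold s'; apply divle1; lra).
  assert (Ha : 0 <= asin s <= asin s') by (split; [apply asin_nonneg; lra| apply asin_mono; lra]).
  assert (Hb : asin s' <= PI/2) by apply asin_bound.
  destruct (G_step (asin s) (asin s') Ha Hb) as [H1 H2].
  rewrite !sin_asin in H1, H2 by lra.
  assert (Ey : y' - y = r * (s' - s)) by (unfold s, s'; field; lra).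
  rewrite Ey. rewrite <- Hrr.
  split.
  - replace (r * (s' - s) * (r * cos (asin s'))) with ((r * r) * ((s' - s) * cos (asin s'))) by ring.
    replace (r * r * G (asin s') - r * r * G (asin s)) with ((r*r) * (G (asin s') - G (asin s))) by ring.
    apply Rmult_le_compat_l; nra.
  - replace (r * (s' - s) * (r * cos (asin s))) with ((r * r) * ((s' - s) * cos (asin s))) by ring.
    replace (r * r * G (asin s') - r * r * G (asin s)) with ((r*r) * (G (asin s') - G (asin s))) by ring.
    apply Rmult_le_compat_l; nra.
Qed.

Lemma wq_out rho y : 0 < rho -> sqrt rho <= y -> wq rho y = 0.
Proof. intros Hr Hy. unfold wq. apply sqrt_neg_0.
  assert (0 <= sqrt rho) by apply sqrt_pos. pose proof (sqrt_sqrt rho). nra. Qed.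

Lemma wq_nonneg rho y : 0 <= wq rho y.
Proof. apply sqrt_pos. Qed.

Lemma Fq_step rho y y' : 0 < rho -> 0 <= y <= y' ->
  (y' - y) * wq rho y' <= Fq rho y' - Fq rho y <= (y' - y) * wq rho y.
Proof.
  intros Hr Hy. set (r := sqrt rho).
  destruct (Rle_dec y' r) as [Hle|Hgt].
  - apply Fq_step_in; auto.
  - destruct (Rle_dec r y) as [Hry|Hyr].
    + unfold Fq. fold r. rewrite !Rmin_right by lra.
      rewrite !wq_out by (fold r; lra). lra.
    + assert (Fq rho y' = Fq rho r) by (unfold Fq; fold r; rewrite !Rmin_right by lra; reflexivity).
      destruct (Fq_step_in rho y r Hr ltac:(lra) ltac:(fold r; lra)) as [H1 H2].
      rewrite (wq_out rho r) in H1 by (fold r; lra).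
      rewrite (wq_out rho y') by (fold r; lra).
      pose proof (wq_nonneg rho y).
      assert ((r - y) * wq rho y <= (y' - y) * wq rho y) by (apply Rmult_le_compat_r; lra).
      lra.
Qed.

Lemma Fq_0 rho : 0 < rho -> Fq rho 0 = 0.
Proof. intros Hr. unfold Fq. rewrite Rmin_left by (apply sqrt_pos).
  unfold Rdiv. rewrite Rmult_0_l, asin_0. unfold G. rewrite sin_0. field. Qed.

Lemma Fq_top rho y : 0 < rho -> sqrt rho <= y -> Fq rho y = PI * rho / 4.
Proof. intros Hr Hy. unfold Fq. rewrite Rmin_right by lra.
  assert (0 < sqrt rho) by (apply sqrt_lt_R0; lra).
  replace (sqrt rho / sqrt rho) with 1 by (field; lra).
  rewrite asin_1. unfold G. rewrite sin_PI2, cos_PI2. field. Qed.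

Lemma fsum_zero M : fsum M (fun _ => 0) = 0.
Proof. induction M; simpl; [|rewrite IHM]; ring. Qed.

Lemma riemann rho s M : 0 <= rho -> 0 < s -> sqrt rho <= INR M * s ->
  PI * rho / 4 - s * sqrt rho <= fsum M (fun i => s * wq rho (INR (S i) * s)) /\
  fsum M (fun i => s * wq rho (INR i * s)) <= PI * rho / 4 + s * sqrt rho.
Proof.
  intros Hr Hs HM.
  destruct (Req_dec rho 0) as [->|Hne].
  - rewrite sqrt_0.
    rewrite (fsum_ext M (fun i => s * wq 0 (INR (S i) * s)) (fun _ => 0)).
    rewrite (fsum_ext M (fun i => s * wq 0 (INR i * s)) (fun _ => 0)).
    + rewrite fsum_zero. replace (PI * 0 / 4) with 0 by field. split; lra.
    + intros; unfold wq. rewrite sqrt_neg_0; [ring|]. pose proof (pos_INR i). nra.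
    + intros; unfold wq. rewrite sqrt_neg_0; [ring|]. pose proof (pos_INR (S i)). nra.
  - assert (Hr' : 0 < rho) by lra.
    pose proof (fsum_telescope M (fun i => Fq rho (INR i * s))) as Ht.
    cbv beta in Ht. replace (INR 0 * s) with 0 in Ht by (simpl; ring). rewrite Fq_0 in Ht by auto.
    rewrite (Fq_top rho) in Ht by auto. rewrite Rminus_0_r in Ht.
    assert (Hsteps: forall i, (i < M)%nat ->
      s * wq rho (INR (S i) * s) <= Fq rho (INR (S i) * s) - Fq rho (INR i * s) <= s * wq rho (INR i * s)).
    { intros i _. assert (E: INR (S i) * s - INR i * s = s) by (rewrite S_INR; ring).
      pose proof (pos_INR i).
      pose proof (Fq_step rho (INR i * s) (INR (S i) * s) Hr' ltac:(rewrite S_INR; split; nra)).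
      rewrite E in H0. exact H0. }
    assert (A1 : fsum M (fun i => s * wq rho (INR (S i) * s)) <= PI * rho / 4).
    { rewrite <- Ht. apply fsum_le. intros; apply Hsteps; auto. }
    assert (A2 : PI * rho / 4 <= fsum M (fun i => s * wq rho (INR i * s))).
    { rewrite <- Ht. apply fsum_le. intros; apply Hsteps; auto. }
    pose proof (fsum_telescope M (fun i => s * wq rho (INR i * s))) as Ht2.
    cbv beta in Ht2. replace (INR 0 * s) with 0 in Ht2 by (simpl; ring).
    rewrite (wq_out rho (INR M * s)) in Ht2 by auto.
    replace (s * wq rho 0) with (s * sqrt rho) in Ht2
      by (unfold wq; rewrite Rmult_0_l, Rminus_0_r; reflexivity).
    assert (E : fsum M (fun i => s * wq rho (INR i * s)) = fsum M (fun i => s * wq rho (INR (S i) * s)) + s * sqrt rho).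
    { assert (fsum M (fun i => s * wq rho (INR (S i) * s) - s * wq rho (INR i * s)) =
        fsum M (fun i => s * wq rho (INR (S i) * s)) + (-1) * fsum M (fun i => s * wq rho (INR i * s))).
      { rewrite <- fsum_scal, <- fsum_plus. apply fsum_ext; intros; ring. }
      lra. }
    lra.
Qed.

Lemma grid_ex M : (0 < M)%nat -> forall s y, 0 < s -> 0 <= y <= INR M * s ->
  exists i, (i < M)%nat /\ INR i * s <= y <= INR (S i) * s.
Proof.
  induction M as [|M IH]; intros HM s y Hs Hy; [lia|].
  destruct M as [|M'].
  - exists 0%nat. split; [lia|]. simpl in *. lra.
  - destruct (Rle_dec y (INR (S M') * s)) as [Hle|Hgt].
    + destruct (IH ltac:(lia) s y Hs ltac:(lra)) as [i [Hi Hi2]]. exists i; split; [lia|auto].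
    + exists (S M'). split; [lia|]. lra.
Qed.

Lemma nat_above x : exists M : nat, x <= INR M.
Proof.
  destruct (archimed x) as [H1 H2].
  destruct (Z_lt_le_dec (up x) 0) as [Hn|Hp].
  - exists 0%nat. simpl. apply IZR_lt in Hn. lra.
  - exists (Z.to_nat (up x)). rewrite INR_IZR_INZ, Z2Nat.id by lia. lra.
Qed.

Lemma level_ex h u : 0 < h -> 0 <= u -> exists j : nat, INR j * h <= u <= INR (S j) * h.
Proof.
  intros Hh Hu. destruct (nat_above (u / h)) as [M HM].
  assert (u <= INR (S M) * h).
  { rewrite S_INR. assert (u / h * h = u) by (field; lra).
    assert (u / h * h <= INR M * h) by (apply Rmult_le_compat_r; lra). lra. }
  destruct (grid_ex (S M) ltac:(lia) h u Hh ltac:(lra)) as [i [_ Hi]]. exists i; auto.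
Qed.

Definition qbox (rho0 rho1 s : R) (i : nat) : box :=
  mkBox (fun k => if Nat.eqb k 0 then wq rho0 (INR (S i) * s) else INR i * s)
        (fun k => if Nat.eqb k 0 then wq rho1 (INR i * s) else INR (S i) * s).

Definition refl (sx sy : bool) (B : box) : box :=
  mkBox (fun k => if Nat.eqb k 0 then (if sx then lo B 0 else - hi B 0) else (if sy then lo B 1 else - hi B 1))
        (fun k => if Nat.eqb k 0 then (if sx then hi B 0 else - lo B 0) else (if sy then hi B 1 else - lo B 1)).

Lemma box_vol2 B : box_vol 2 B = Rmax 0 (hi B 0 - lo B 0) * Rmax 0 (hi B 1 - lo B 1).
Proof. unfold box_vol; simpl. ring. Qed.

Lemma refl_vol sx sy B : box_vol 2 (refl sx sy B) = box_vol 2 B.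
Proof. rewrite !box_vol2. destruct sx, sy; simpl;
  repeat match goal with |- context [- ?a - - ?b] => replace (- a - - b) with (b - a) by ring end;
  reflexivity. Qed.

Definition acover (rho0 rho1 s : R) (M : nat) : list box :=
  flat_map (fun B => [refl true true B; refl true false B; refl false true B; refl false false B])
    (map (qbox rho0 rho1 s) (seq 0 M)).

Lemma qbox_vol rho0 rho1 s i : 0 <= rho0 <= rho1 -> 0 < s ->
  box_vol 2 (qbox rho0 rho1 s i) = s * wq rho1 (INR i * s) - s * wq rho0 (INR (S i) * s).
Proof.
  intros Hr Hs. rewrite box_vol2. cbn [qbox lo hi Nat.eqb].
  assert (wq rho0 (INR (S i) * s) <= wq rho1 (INR i * s)).
  { unfold wq. apply sqrt_le_1_alt. rewrite S_INR. pose proof (pos_INR i). nra. }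
  rewrite !Rmax_right. rewrite S_INR; ring.
  rewrite S_INR; lra. lra.
Qed.

Lemma acover_vol rho0 rho1 s M : 0 <= rho0 <= rho1 -> 0 < s ->
  lsum (map (box_vol 2) (acover rho0 rho1 s M)) =
  4 * (fsum M (fun i => s * wq rho1 (INR i * s)) - fsum M (fun i => s * wq rho0 (INR (S i) * s))).
Proof.
  intros Hr Hs. unfold acover. rewrite lsum_flat_map.
  rewrite (lsum_map_ext _ (fun B => 4 * box_vol 2 B)).
  2:{ intros B _. unfold lsum; cbn [map fold_right]. rewrite !refl_vol. lra. }
  rewrite lsum_map_scal, map_map, lsum_seq.
  f_equal. rewrite (fsum_ext M _ (fun i => s * wq rho1 (INR i * s) + (-1) * (s * wq rho0 (INR (S i) * s)))).
  rewrite fsum_plus, (fsum_scal M (-1) (fun i => s * wq rho0 (INR (S i) * s))). ring.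
  intros i _. rewrite qbox_vol by auto. ring.
Qed.

Lemma sq_abs x : Rabs x * Rabs x = x * x.
Proof. unfold Rabs; destruct Rcase_abs; ring. Qed.

Lemma annulus_cover rho0 rho1 delta : 0 <= rho0 <= rho1 -> 0 < rho1 -> 0 < delta ->
  exists L : list box,
    (forall p, rho0 <= p 0%nat * p 0%nat + p 1%nat * p 1%nat <= rho1 ->
       exists Q, In Q L /\ in_box 2 Q p) /\
    lsum (map (box_vol 2) L) <= PI * (rho1 - rho0) + delta.
Proof.
  intros Hr H1 Hd.
  set (r1 := sqrt rho1). assert (Hr1 : 0 < r1) by (apply sqrt_lt_R0; lra).
  assert (Hr11 : r1 * r1 = rho1) by (apply sqrt_sqrt; lra).
  destruct (nat_above (8 * rho1 / delta + 1)) as [M0 HM0].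
  set (M := S M0). assert (HM : 8 * rho1 / delta <= INR M) by (unfold M; rewrite S_INR; lra).
  assert (HMp : 0 < INR M) by (unfold M; rewrite S_INR; pose proof (pos_INR M0); lra).
  set (s := r1 / INR M). assert (Hs : 0 < s) by (unfold s; apply Rdiv_lt_0_compat; lra).
  assert (HMs : INR M * s = r1) by (unfold s; field; lra).
  exists (acover rho0 rho1 s M). split.
  - intros p Hp.
    set (x := Rabs (p 0%nat)). set (y := Rabs (p 1%nat)).
    assert (Hx0 : 0 <= x) by apply Rabs_pos. assert (Hy0 : 0 <= y) by apply Rabs_pos.
    assert (Hxy : rho0 <= x * x + y * y <= rho1) by (unfold x, y; rewrite !sq_abs; lra).
    assert (Hyr : y <= r1).
    { destruct (Rle_dec y r1); auto. nra. }
    destruct (grid_ex M ltac:(unfold M; lia) s y Hs ltac:(lra)) as [i [Hi [Hy1 Hy2]]].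
    assert (Hxu : x <= wq rho1 (INR i * s)).
    { unfold wq. rewrite <- (sqrt_square x) by auto. apply sqrt_le_1_alt.
      pose proof (pos_INR i). assert (0 <= INR i * s) by nra.
      assert (INR i * s * (INR i * s) <= y * y) by (apply Rmult_le_compat; lra). lra. }
    assert (Hxl : wq rho0 (INR (S i) * s) <= x).
    { unfold wq. rewrite <- (sqrt_square x) by auto. apply sqrt_le_1_alt.
      assert (y * y <= INR (S i) * s * (INR (S i) * s)) by (apply Rmult_le_compat; lra). lra. }
    assert (Hin : In (qbox rho0 rho1 s i) (map (qbox rho0 rho1 s) (seq 0 M))).
    { apply in_map. apply in_seq. lia. }
    assert (HH : forall sx sy, In (refl sx sy (qbox rho0 rho1 s i)) (acover rho0 rho1 s M)).
    { intros sx sy. unfold acover. apply in_flat_map. exists (qbox rho0 rho1 s i). split; auto.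
      destruct sx, sy; simpl; tauto. }
    destruct (Rle_dec 0 (p 0%nat)) as [Hp0|Hp0]; destruct (Rle_dec 0 (p 1%nat)) as [Hp1|Hp1].
    + exists (refl true true (qbox rho0 rho1 s i)). split; auto.
      intros k Hk. destruct k as [|[|k]]; [| |lia]; cbn [refl qbox lo hi Nat.eqb].
      * unfold x in *; rewrite Rabs_right in * by lra. lra.
      * unfold y in *; rewrite Rabs_right in * by lra. lra.
    + exists (refl true false (qbox rho0 rho1 s i)). split; auto.
      intros k Hk. destruct k as [|[|k]]; [| |lia]; cbn [refl qbox lo hi Nat.eqb].
      * unfold x in *; rewrite Rabs_right in * by lra. lra.
      * unfold y in *; rewrite Rabs_left in * by lra. lra.
    + exists (refl false true (qbox rho0 rho1 s i)). split; auto.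
      intros k Hk. destruct k as [|[|k]]; [| |lia]; cbn [refl qbox lo hi Nat.eqb].
      * unfold x in *; rewrite Rabs_left in * by lra. lra.
      * unfold y in *; rewrite Rabs_right in * by lra. lra.
    + exists (refl false false (qbox rho0 rho1 s i)). split; auto.
      intros k Hk. destruct k as [|[|k]]; [| |lia]; cbn [refl qbox lo hi Nat.eqb].
      * unfold x in *; rewrite Rabs_left in * by lra. lra.
      * unfold y in *; rewrite Rabs_left in * by lra. lra.
  - rewrite acover_vol by (auto; lra).
    assert (Hr0 : sqrt rho0 <= r1) by (apply sqrt_le_1_alt; lra).
    destruct (riemann rho1 s M ltac:(lra) Hs ltac:(fold r1; lra)) as [_ U1].
    destruct (riemann rho0 s M ltac:(lra) Hs ltac:(lra)) as [L0 _].
    fold r1 in U1.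
    assert (8 * s * r1 <= delta).
    { replace (8 * s * r1) with (8 * rho1 / INR M) by (unfold s; rewrite <- Hr11; field; lra).
      apply (Rmult_le_reg_r (INR M)); auto.
      replace (8 * rho1 / INR M * INR M) with (8 * rho1) by (field; lra).
      apply (Rmult_le_reg_r (/ delta)). apply Rinv_0_lt_compat; lra.
      replace (delta * INR M * / delta) with (INR M) by (field; lra).
      unfold Rdiv in HM. lra. }
    assert (0 <= sqrt rho0) by apply sqrt_pos.
    nra.
Qed.

Fixpoint allvec (k J : nat) : list (list nat) :=
  match k with
  | O => [[]]
  | S k' => flat_map (fun l => map (fun j => l ++ [j]) (seq 0 (S J))) (allvec k' J)
  end.

Lemma allvec_len k J l : In l (allvec k J) -> length l = k.
Proof.
  revert l; induction k; cbn [allvec]; intros l H.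
  - destruct H as [<-|[]]; reflexivity.
  - apply in_flat_map in H as [l' [Hl' Hm]]. apply in_map_iff in Hm as [j [<- _]].
    rewrite length_app; simpl; rewrite (IHk l' Hl'); lia.
Qed.

Lemma allvec_in k J (f : nat -> nat) : (forall x, (x < k)%nat -> (f x <= J)%nat) ->
  In (map f (seq 0 k)) (allvec k J).
Proof.
  induction k; cbn [allvec]; intros H.
  - left; reflexivity.
  - rewrite seq_S, map_app. apply in_flat_map. exists (map f (seq 0 k)). split.
    + apply IHk; intros; apply H; lia.
    + apply in_map_iff. exists (f k). split; [reflexivity|]. apply in_seq.
      specialize (H k ltac:(lia)). lia.
Qed.

Lemma fprod_app k l j (phi : nat -> R) : length l = k ->
  fprod (S k) (fun x => phi (nth x (l ++ [j]) 0%nat)) = fprod k (fun x => phi (nth x l 0%nat)) * phi j.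
Proof.
  intros Hl. cbn [fprod]. rewrite app_nth2 by lia. rewrite Hl, Nat.sub_diag. simpl.
  f_equal. apply fprod_ext. intros i Hi. rewrite app_nth1 by lia. reflexivity.
Qed.

Lemma allvec_sum k J (phi : nat -> R) :
  lsum (map (fun l => fprod k (fun x => phi (nth x l 0%nat))) (allvec k J)) = (fsum (S J) phi) ^ k.
Proof.
  induction k.
  - simpl. ring.
  - cbn [allvec]. rewrite lsum_flat_map.
    rewrite (lsum_map_ext _ (fun l => fprod k (fun x => phi (nth x l 0%nat)) * fsum (S J) phi)).
    + rewrite lsum_map_scal_r, IHk. simpl. ring.
    + intros l Hl. rewrite map_map.
      rewrite (lsum_map_ext _ (fun j => fprod k (fun x => phi (nth x l 0%nat)) * phi j)).
      * rewrite lsum_map_scal, lsum_seq. reflexivity.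
      * intros j _. apply fprod_app. eapply allvec_len; eauto.
Qed.

Definition ext2 (B : box) (k : nat) (Q : box) : box :=
  mkBox (fun i => if Nat.eqb i (2*k) then lo Q 0 else if Nat.eqb i (2*k+1) then lo Q 1 else lo B i)
        (fun i => if Nat.eqb i (2*k) then hi Q 0 else if Nat.eqb i (2*k+1) then hi Q 1 else hi B i).

Lemma ext2_vol B k Q : box_vol (2 * S k) (ext2 B k Q) = box_vol (2*k) B * box_vol 2 Q.
Proof.
  replace (2 * S k)%nat with (S (S (2*k))) by lia. unfold box_vol. cbn [fprod].
  rewrite (fprod_ext (2*k) _ (fun i => Rmax 0 (hi B i - lo B i))).
  - cbn [ext2 lo hi]. rewrite Nat.eqb_refl.
    replace (Nat.eqb (S (2*k)) (2*k)) with false by (symmetry; apply Nat.eqb_neq; lia).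
    replace (Nat.eqb (S (2*k)) (2*k+1)) with true by (symmetry; apply Nat.eqb_eq; lia).
    ring.
  - intros i Hi. cbn [ext2 lo hi].
    replace (Nat.eqb i (2*k)) with false by (symmetry; apply Nat.eqb_neq; lia).
    replace (Nat.eqb i (2*k+1)) with false by (symmetry; apply Nat.eqb_neq; lia).
    reflexivity.
Qed.

Lemma ext2_in B k Q z : in_box (2*k) B z -> in_box 2 Q (fun i => z (2*k+i)%nat) ->
  in_box (2 * S k) (ext2 B k Q) z.
Proof.
  intros HB HQ i Hi. cbn [ext2 lo hi].
  destruct (Nat.eqb_spec i (2*k)) as [->|H1].
  - specialize (HQ 0%nat ltac:(lia)). simpl in HQ. rewrite Nat.add_0_r in HQ. exact HQ.
  - destruct (Nat.eqb_spec i (2*k+1)) as [->|H2].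
    + specialize (HQ 1%nat ltac:(lia)). exact HQ.
    + apply HB. lia.
Qed.

Fixpoint PC (acov : nat -> list box) (l : list nat) (k : nat) : list box :=
  match k with
  | O => [box0]
  | S k' => flat_map (fun B => map (fun Q => ext2 B k' Q) (acov (nth k' l 0%nat))) (PC acov l k')
  end.

Lemma PC_vol acov l alpha k : 0 <= alpha ->
  (forall j, lsum (map (box_vol 2) (acov j)) <= alpha) ->
  lsum (map (box_vol (2*k)) (PC acov l k)) <= alpha ^ k.
Proof.
  intros Ha Hacov. induction k.
  - simpl. unfold box_vol. simpl. lra.
  - cbn [PC]. rewrite lsum_flat_map.
    apply Rle_trans with (lsum (map (fun B => box_vol (2*k) B * alpha) (PC acov l k))).
    + apply lsum_map_le. intros B _. rewrite map_map.
      rewrite (lsum_map_ext _ (fun Q => box_vol (2*k) B * box_vol 2 Q)) by (intros; apply ext2_vol).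
      rewrite lsum_map_scal. apply Rmult_le_compat_l; [apply box_vol_nonneg|apply Hacov].
    + rewrite lsum_map_scal_r. simpl. rewrite Rmult_comm. apply Rmult_le_compat_l; auto.
Qed.

Lemma PC_cov acov (annP : nat -> (nat -> R) -> Prop) l k z :
  (forall j p, annP j p -> exists Q, In Q (acov j) /\ in_box 2 Q p) ->
  (forall x, (x < k)%nat -> annP (nth x l 0%nat) (fun i => z (2*x+i)%nat)) ->
  exists B, In B (PC acov l k) /\ in_box (2*k) B z.
Proof.
  intros Hacov. induction k; intros Hz.
  - exists box0. split; [left; reflexivity|]. intros i Hi; lia.
  - destruct IHk as [B [HB HBz]]. { intros; apply Hz; lia. }
    destruct (Hacov _ _ (Hz k ltac:(lia))) as [Q [HQ HQz]].
    exists (ext2 B k Q). split.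
    + cbn [PC]. apply in_flat_map. exists B. split; auto. apply in_map; auto.
    + apply ext2_in; auto.
Qed.

Definition ext1 (B : box) (m : nat) (a b : R) : box :=
  mkBox (fun i => if Nat.eqb i m then a else lo B i) (fun i => if Nat.eqb i m then b else hi B i).

Lemma ext1_vol B m a b : box_vol (S m) (ext1 B m a b) = box_vol m B * Rmax 0 (b - a).
Proof.
  unfold box_vol. cbn [fprod]. cbn [ext1 lo hi]. rewrite Nat.eqb_refl. f_equal.
  apply fprod_ext. intros i Hi. cbn [ext1 lo hi].
  replace (Nat.eqb i m) with false by (symmetry; apply Nat.eqb_neq; lia). reflexivity.
Qed.

Lemma ext1_in B m a b z : in_box m B z -> a <= z m <= b -> in_box (S m) (ext1 B m a b) z.
Proof.
  intros HB Hz i Hi. cbn [ext1 lo hi]. destruct (Nat.eqb_spec i m) as [->|H]; auto.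
  apply HB; lia.
Qed.

Lemma lsum_filter_le {T} (p : T -> bool) (F G : T -> R) L :
  (forall x, In x L -> p x = true -> F x <= G x) -> (forall x, In x L -> 0 <= G x) ->
  lsum (map F (filter p L)) <= lsum (map G L).
Proof.
  induction L as [|a L IH]; simpl; intros H1 H2; [lra|].
  assert (lsum (map F (filter p L)) <= lsum (map G L)) by (apply IH; auto).
  destruct (p a) eqn:E; simpl.
  - pose proof (H1 a (or_introl eq_refl) E). lra.
  - pose proof (H2 a (or_introl eq_refl)). lra.
Qed.

Lemma fsum_term_le n f x : (forall i, (i < n)%nat -> 0 <= f i) -> (x < n)%nat -> f x <= fsum n f.
Proof.
  induction n; intros H Hx; [lia|]. cbn [fsum].
  destruct (Nat.eq_dec x n) as [->|Hne].
  - assert (0 <= fsum n f) by (apply fsum_nonneg; intros; apply H; lia). lra.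
  - assert (f x <= fsum n f) by (apply IHn; [intros; apply H; lia| lia]).
    pose proof (H n ltac:(lia)). lra.
Qed.

Lemma fsum_sq_le n g : (forall i, (i < n)%nat -> 0 <= g i) ->
  fsum n (fun i => g i * g i) <= fsum n g * fsum n g.
Proof.
  induction n; intros H; cbn [fsum]; [lra|].
  assert (fsum n (fun i => g i * g i) <= fsum n g * fsum n g) by (apply IHn; intros; apply H; lia).
  assert (0 <= fsum n g) by (apply fsum_nonneg; intros; apply H; lia).
  pose proof (H n ltac:(lia)). nra.
Qed.

Lemma fprod_exp n f : fprod n (fun x => exp (- f x)) = exp (- fsum n f).
Proof.
  induction n; cbn [fprod fsum].
  - rewrite Ropp_0, exp_0; reflexivity.
  - rewrite IHn, <- exp_plus. f_equal; ring.
Qed.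

Lemma fsum_const n c : fsum n (fun _ => c) = INR n * c.
Proof. induction n; cbn [fsum]; [simpl; ring|rewrite IHn, S_INR; ring]. Qed.

Lemma geom_le q K : 0 <= q < 1 -> fsum K (fun j => q ^ j) <= 1 / (1 - q).
Proof.
  intros Hq. assert (E : fsum K (fun j => q ^ j) = (1 - q ^ K) / (1 - q)).
  { induction K; cbn [fsum]; [simpl; field; lra|]. rewrite IHK. simpl. field. lra. }
  rewrite E. assert (0 <= q ^ K) by (apply pow_le; lra).
  unfold Rdiv. apply Rmult_le_compat_r; [left; apply Rinv_0_lt_compat; lra| lra].
Qed.

Lemma exp_INR_pow x j : exp (x * INR j) = exp x ^ j.
Proof.
  induction j; [simpl; rewrite Rmult_0_r, exp_0; reflexivity|].
  rewrite S_INR, Rmult_plus_distr_l, Rmult_1_r, exp_plus, IHj. simpl. ring.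
Qed.

Lemma s_lower s A D : 0 <= s -> 0 < A -> 0 <= D -> A * A - D <= s * s -> A - D / A <= s.
Proof.
  intros Hs HA HD H. destruct (Rle_dec A s).
  - assert (0 <= D / A) by (unfold Rdiv; apply Rmult_le_pos; [lra|left; apply Rinv_0_lt_compat; lra]). lra.
  - assert (A * A - D <= s * A) by nra.
    apply (Rmult_le_reg_r A); auto. replace ((A - D / A) * A) with (A * A - D) by (field; lra). lra.
Qed.

Lemma heart (n : nat) (u : nat -> R) (lv : nat -> nat) (h t lam m A R Q : R) :
  0 < h -> 0 < t -> 0 < lam -> 0 <= m -> 0 < A -> 0 <= R ->
  (forall x, INR (lv x) * h <= u x <= INR (S (lv x)) * h) ->
  (forall x, 0 <= u x) ->
  fsum n u <= R -> A * A <= Q -> Q <= fsum n (fun x => u x * u x) ->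
  fsum n (fun x => if Rle_dec (INR (lv x) * h) t then lam * (INR (lv x) * h) else m)
    <= lam * (R - A + (t + h) * R / A) + m * (R / t).
Proof.
  intros Hh Ht Hlam Hm HA HR Hlv Hu0 HS2 HAQ HS4.
  set (v := fun x => INR (lv x) * h).
  set (sm := fun x => if Rle_dec (v x) t then v x else 0).
  set (bg := fun x => if Rle_dec (v x) t then 0 else 1).
  set (us := fun x => if Rle_dec (v x) t then u x else 0).
  set (ub := fun x => if Rle_dec (v x) t then 0 else u x).
  assert (P1 : forall x, (if Rle_dec (INR (lv x) * h) t then lam * (INR (lv x) * h) else m) = lam * sm x + m * bg x).
  { intros x. unfold sm, bg, v. destruct Rle_dec; ring. }
  assert (P2 : forall x, sm x <= us x).
  { intros x. unfold sm, us, v. pose proof (Hlv x). destruct Rle_dec; lra. }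
  assert (P3 : forall x, bg x * t <= u x).
  { intros x. unfold bg, v. pose proof (Hlv x). pose proof (Hu0 x). destruct Rle_dec; lra. }
  assert (P4 : forall x, us x + ub x = u x).
  { intros x. unfold us, ub. destruct Rle_dec; ring. }
  assert (P5 : forall x, u x * u x <= (t + h) * us x + ub x * ub x).
  { intros x. unfold us, ub, v. pose proof (Hlv x). pose proof (Hu0 x). rewrite S_INR in H.
    destruct Rle_dec; nra. }
  assert (P6 : forall x, 0 <= ub x) by (intros x; unfold ub; pose proof (Hu0 x); destruct Rle_dec; lra).
  assert (P7 : forall x, 0 <= us x) by (intros x; unfold us; pose proof (Hu0 x); destruct Rle_dec; lra).
  rewrite (fsum_ext n _ (fun x => lam * sm x + m * bg x)) by (intros; apply P1).
  rewrite fsum_plus, (fsum_scal n lam sm), (fsum_scal n m bg).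
  assert (F2 : fsum n sm <= fsum n us) by (apply fsum_le; intros; apply P2).
  assert (F3 : fsum n bg * t <= R).
  { apply Rle_trans with (fsum n u); auto.
    rewrite Rmult_comm, <- fsum_scal. apply fsum_le. intros; rewrite Rmult_comm; apply P3. }
  assert (F3' : fsum n bg <= R / t).
  { apply (Rmult_le_reg_r t); auto. replace (R / t * t) with R by (field; lra). lra. }
  assert (F4 : fsum n us + fsum n ub = fsum n u).
  { rewrite <- fsum_plus. apply fsum_ext; intros; apply P4. }
  assert (F5 : fsum n (fun x => u x * u x) <= (t + h) * fsum n us + fsum n ub * fsum n ub).
  { apply Rle_trans with (fsum n (fun x => (t + h) * us x + ub x * ub x)).
    - apply fsum_le; intros; apply P5.
    - rewrite fsum_plus, fsum_scal. pose proof (fsum_sq_le n ub ltac:(intros; apply P6)). lra. }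
  assert (Hus0 : 0 <= fsum n ub) by (apply fsum_nonneg; intros; apply P6).
  assert (Hus1 : 0 <= fsum n us) by (apply fsum_nonneg; intros; apply P7).
  assert (Hs : A - (t + h) * R / A <= fsum n ub).
  { apply s_lower; auto. apply Rmult_le_pos; lra.
    assert ((t + h) * fsum n us <= (t + h) * R) by (apply Rmult_le_compat_l; lra). lra. }
  assert (fsum n sm <= R - A + (t + h) * R / A) by lra.
  assert (lam * fsum n sm <= lam * (R - A + (t + h) * R / A)) by (apply Rmult_le_compat_l; lra).
  assert (m * fsum n bg <= m * (R / t)) by (apply Rmult_le_compat_l; lra).
  lra.
Qed.

Lemma exp_le_exp' x y : x <= y -> exp x <= exp y.
Proof. intros [H|H]; [left; apply exp_increasing; auto| rewrite H; lra]. Qed.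

Lemma core beta n a b e h t lam m A :
  e = Rpower (INR n) (-(1/5)) ->
  (1 <= n)%nat -> 0 <= beta -> 0 < h -> 0 < t -> 0 < lam -> 0 <= m -> 0 < A -> 0 < b ->
  A * A <= a ^ 2 * INR n ^ 2 * (1 - e) ->
  lebesgue_outer_le (2 * n + 1) (Zsubgraph beta n a b)
   (exp (beta / INR n * (a ^ 2 * INR n ^ 2 * (1 + e))) *
    exp (lam * (b * INR n * (1 + e) - A + (t + h) * (b * INR n * (1 + e)) / A)
         + m * (b * INR n * (1 + e) / t)) *
    (PI * (h + h * h) * (1 / (1 - exp (- lam * h)) + (b * INR n * (1 + e) / h + 2) * exp (- m))) ^ n).
Proof.
  intros He Hn Hbeta Hh Ht Hlam Hm HA Hb HAA.
  set (N := INR n) in *.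
  assert (HN : 1 <= N) by (unfold N; apply (le_INR 1) in Hn; simpl in Hn; lra).
  assert (He0 : 0 < e) by (rewrite He; unfold Rpower; apply exp_pos).
  set (R := b * N * (1 + e)) in *.
  assert (HR : 0 < R) by (unfold R; apply Rmult_lt_0_compat; [nra|lra]).
  destruct (level_ex h R Hh ltac:(lra)) as [j0 [Hj0a Hj0b]].
  set (J := S j0).
  assert (Hac : forall j : nat, exists L : list box,
     (forall p, INR j * h <= p 0%nat * p 0%nat + p 1%nat * p 1%nat <= INR (S j) * h ->
        exists Q, In Q L /\ in_box 2 Q p) /\
     lsum (map (box_vol 2) L) <= PI * (h + h * h)).
  { intros j. pose proof PI_RGT_0. pose proof (pos_INR j).
    destruct (annulus_cover (INR j * h) (INR (S j) * h) (PI * h * h)) as [L [HL1 HL2]].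
    - rewrite S_INR; split; nra.
    - rewrite S_INR; nra.
    - apply Rmult_lt_0_compat; [apply Rmult_lt_0_compat|]; lra.
    - exists L; split; auto. rewrite S_INR in HL2.
      replace (PI * (h + h * h)) with (PI * ((INR j + 1) * h - INR j * h) + PI * h * h) by ring. exact HL2. }
  set (acov := fun j => proj1_sig (constructive_indefinite_description _ (Hac j))).
  assert (Hacov1 : forall j p, INR j * h <= p 0%nat * p 0%nat + p 1%nat * p 1%nat <= INR (S j) * h ->
        exists Q, In Q (acov j) /\ in_box 2 Q p).
  { intros j. exact (proj1 (proj2_sig (constructive_indefinite_description _ (Hac j)))). }
  assert (Hacov2 : forall j, lsum (map (box_vol 2) (acov j)) <= PI * (h + h * h)).
  { intros j. exact (proj2 (proj2_sig (constructive_indefinite_description _ (Hac j)))). }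
  set (c := fun j : nat => if Rle_dec (INR j * h) t then lam * (INR j * h) else m).
  set (phi := fun j => exp (- c j)).
  set (W := fun l : list nat => fprod n (fun x => phi (nth x l 0%nat))).
  set (Lam := lam * (R - A + (t + h) * R / A) + m * (R / t)).
  set (adm := fun l => if Rle_dec (exp (- Lam)) (W l) then true else false).
  set (Ht0 := exp (beta / N * (a ^ 2 * N ^ 2 * (1 + e)))).
  set (Lf := map (fun B => ext1 B (2 * n) 0 Ht0)
                 (flat_map (fun l => PC acov l n) (filter adm (allvec n J)))).
  replace (2 * n + 1)%nat with (S (2 * n)) by lia.
  apply (outer_of_list _ _ Lf); [lia| |].
  - intros z [HG Hz]. unfold Gamma in HG. cbv zeta in HG. fold N in HG. rewrite <- He in HG.
    fold R in HG.
    destruct HG as [[H4a H4b] [H2a H2b]].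
    set (u := fun x => cabs z x ^ 2).
    assert (Hu0 : forall x, 0 <= u x) by (intros; unfold u; apply pow2_ge_0).
    assert (HS2 : Sk n 2 z = fsum n u) by reflexivity.
    assert (HS4 : Sk n 4 z = fsum n (fun x => u x * u x)) by (unfold Sk; apply fsum_ext; intros; unfold u; ring).
    set (lv := fun x => proj1_sig (constructive_indefinite_description _ (level_ex h (u x) Hh (Hu0 x)))).
    assert (Hlv : forall x, INR (lv x) * h <= u x <= INR (S (lv x)) * h).
    { intros x. unfold lv. destruct (constructive_indefinite_description _ _); simpl; auto. }
    assert (HuS : forall x, (x < n)%nat -> u x <= R).
    { intros x Hx. apply Rle_trans with (fsum n u); [apply fsum_term_le; auto| lra]. }
    set (l := map lv (seq 0 n)).
    assert (Hnth : forall x, (x < n)%nat -> nth x l 0%nat = lv x).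
    { intros x Hx. unfold l. rewrite nth_indep with (d' := lv 0%nat) by (rewrite length_map, length_seq; auto).
      rewrite map_nth, seq_nth by auto. reflexivity. }
    assert (Hall : In l (allvec n J)).
    { apply allvec_in. intros x Hx. specialize (Hlv x). specialize (HuS x Hx).
      apply INR_le. apply (Rmult_le_reg_r h); auto. unfold J. lra. }
    assert (Hadm : adm l = true).
    { unfold adm. destruct Rle_dec as [|Hno]; auto. exfalso; apply Hno.
      unfold W, phi. rewrite (fprod_ext n _ (fun x => exp (- c (lv x)))) by (intros; rewrite Hnth; auto).
      rewrite (fprod_exp n (fun x => c (lv x))). apply exp_le_exp'. apply Ropp_le_contravar.
      unfold c, Lam. apply (heart n u lv h t lam m A R (a ^ 2 * N ^ 2 * (1 - e))); auto; try lra. }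
    destruct (PC_cov acov (fun j p => INR j * h <= p 0%nat * p 0%nat + p 1%nat * p 1%nat <= INR (S j) * h)
                l n z Hacov1) as [B [HB HBz]].
    { intros x Hx. rewrite Hnth by auto. cbv beta. rewrite Nat.add_0_r.
      assert (Eu : u x = z (2 * x)%nat * z (2 * x)%nat + z (2 * x + 1)%nat * z (2 * x + 1)%nat).
      { unfold u, cabs. rewrite pow2_sqrt; [ring|]. pose proof (pow2_ge_0 (z (2 * x)%nat)).
        pose proof (pow2_ge_0 (z (2 * x + 1)%nat)). lra. }
      rewrite <- Eu. apply Hlv. }
    exists (ext1 B (2 * n) 0 Ht0). split.
    + unfold Lf. apply (in_map (fun B1 => ext1 B1 (2 * n) 0 Ht0)). apply in_flat_map. exists l. split; auto. apply filter_In; auto.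
    + apply ext1_in; auto. destruct Hz as [Hz1 Hz2]. split; auto.
      apply Rle_trans with (1 := Hz2). unfold Ht0. apply exp_le_exp'.
      apply Rmult_le_compat_l; auto. unfold Rdiv. apply Rmult_le_pos; auto.
      left; apply Rinv_0_lt_compat; lra.
  - unfold Lf. rewrite map_map.
    assert (HHh : 0 < Ht0) by apply exp_pos.
    rewrite (lsum_map_ext _ (fun B => box_vol (2 * n) B * Ht0))
      by (intros; rewrite ext1_vol; rewrite Rmax_right by lra; f_equal; ring).
    rewrite lsum_map_scal_r, lsum_flat_map.
    set (alpha := PI * (h + h * h)).
    assert (Halpha : 0 <= alpha) by (unfold alpha; pose proof PI_RGT_0; nra).
    assert (HW0 : forall l, 0 <= W l).
    { intros l. unfold W. apply fprod_nonneg. intros; unfold phi; left; apply exp_pos. }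
    apply Rle_trans with (lsum (map (fun l => alpha ^ n * exp Lam * W l) (allvec n J)) * Ht0).
    { apply Rmult_le_compat_r; [lra|]. apply lsum_filter_le.
      - intros l _ Hl. unfold adm in Hl. destruct Rle_dec as [Hw|]; [|discriminate].
        apply Rle_trans with (alpha ^ n). apply PC_vol; auto.
        rewrite Rmult_assoc. rewrite <- (Rmult_1_r (alpha ^ n)) at 1.
        apply Rmult_le_compat_l; [apply pow_le; auto|].
        replace 1 with (exp Lam * exp (- Lam)) by (rewrite <- exp_plus; rewrite Rplus_opp_r; apply exp_0).
        apply Rmult_le_compat_l; [left; apply exp_pos| auto].
      - intros; apply Rmult_le_pos; [apply Rmult_le_pos; [apply pow_le; auto| left; apply exp_pos]| auto]. }
    rewrite lsum_map_scal. unfold W. rewrite allvec_sum.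
    set (q := exp (- lam * h)).
    assert (Hq : 0 <= q < 1).
    { unfold q. split; [left; apply exp_pos|]. rewrite <- exp_0. apply exp_increasing. nra. }
    assert (Hphi : fsum (S J) phi <= 1 / (1 - q) + (R / h + 2) * exp (- m)).
    { apply Rle_trans with (fsum (S J) (fun j => q ^ j) + fsum (S J) (fun _ => exp (- m))).
      - rewrite <- fsum_plus. apply fsum_le. intros j _. unfold phi, c.
        assert (Eq : exp (- (lam * (INR j * h))) = q ^ j).
        { unfold q. rewrite <- exp_INR_pow. f_equal. ring. }
        pose proof (exp_pos (- m)). pose proof (pow_le q j (proj1 Hq)).
        destruct Rle_dec; [rewrite Eq|]; lra.
      - rewrite fsum_const. pose proof (geom_le q (S J) Hq).
        assert (INR (S J) <= R / h + 2).
        { unfold J. rewrite !S_INR. apply (Rmult_le_reg_r h); auto.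
          replace ((R / h + 2) * h) with (R + 2 * h) by (field; lra). nra. }
        assert (INR (S J) * exp (- m) <= (R / h + 2) * exp (- m)).
        { apply Rmult_le_compat_r; [left; apply exp_pos| auto]. }
        lra. }
    assert (Hphi0 : 0 <= fsum (S J) phi) by (apply fsum_nonneg; intros; unfold phi; left; apply exp_pos).
    replace (alpha ^ n * exp Lam * fsum (S J) phi ^ n * Ht0) with (Ht0 * exp Lam * (alpha * fsum (S J) phi) ^ n)
      by (rewrite Rpow_mult_distr; ring).
    apply Rmult_le_compat_l; [apply Rmult_le_pos; left; apply exp_pos|].
    apply pow_incr. split; [apply Rmult_le_pos; auto|].
    apply Rmult_le_compat_l; auto.
Qed.

Lemma outer_mono m S x y : lebesgue_outer_le m S x -> x <= y -> lebesgue_outer_le m S y.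
Proof. intros H Hxy dl Hd. destruct (H dl Hd) as [Q [H1 H2]]. exists Q; split; auto.
  intros N; specialize (H2 N); lra. Qed.

Lemma ln_le_sub1 x : 0 < x -> ln x <= x - 1.
Proof. intros Hx. pose proof (exp_ineq1_le (ln x)). rewrite exp_ln in H by auto. lra. Qed.

Lemma Rpower_pos x y : 0 < Rpower x y.
Proof. unfold Rpower; apply exp_pos. Qed.

Lemma one_minus_exp x : 0 < x -> x / (1 + x) <= 1 - exp (- x).
Proof.
  intros Hx. pose proof (exp_ineq1_le x).
  assert (exp (- x) = / exp x) by (apply exp_Ropp).
  assert (0 < exp x) by apply exp_pos.
  rewrite H0. apply (Rmult_le_reg_r (exp x * (1 + x))). apply Rmult_lt_0_compat; lra.
  replace (x / (1 + x) * (exp x * (1 + x))) with (x * exp x) by (field; lra).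
  replace ((1 - / exp x) * (exp x * (1 + x))) with ((exp x - 1) * (1 + x)) by (field; lra).
  nra.
Qed.

Lemma X_bound (h lam q R m d s p : R) :
  0 < h -> 0 < lam -> q = exp (- lam * h) -> 0 <= R -> 0 < d -> 0 <= s -> 0 < p ->
  / lam <= d + s ->
  p * (h + h * h) * (1 / (1 - q) + (R / h + 2) * exp (- m)) <=
  exp (ln p + ln d + s / d + h + (lam * h + lam * (R + 2 * h) * exp (- m))).
Proof.
  intros Hh Hlam Hq HR Hd Hs Hp Hinv.
  assert (Hx : 0 < lam * h) by nra.
  pose proof (one_minus_exp (lam * h) Hx) as H1. replace (- (lam * h)) with (- lam * h) in H1 by ring. rewrite <- Hq in H1.
  assert (Hq1 : 0 < 1 - q).
  { apply Rlt_le_trans with (2 := H1). apply Rdiv_lt_0_compat; lra. }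
  assert (Hhq : h / (1 - q) <= / lam + h).
  { apply (Rmult_le_reg_r (1 - q)); auto. replace (h / (1 - q) * (1 - q)) with h by (field; lra).
    apply Rle_trans with ((/ lam + h) * (lam * h / (1 + lam * h))).
    - right. field. nra.
    - apply Rmult_le_compat_l; auto. pose proof (Rinv_0_lt_compat lam Hlam). lra. }
  set (em := exp (- m)). assert (Hem : 0 < em) by apply exp_pos.
  set (Z := lam * h + lam * (R + 2 * h) * em).
  assert (HZ : 0 <= Z) by (unfold Z; assert (0 <= lam * (R + 2 * h) * em) by (apply Rmult_le_pos; [nra|lra]); nra).
  assert (E1 : p * (h + h * h) * (1 / (1 - q) + (R / h + 2) * em) =
     p * (1 + h) * (h / (1 - q) + (R + 2 * h) * em)) by (field; lra).
  rewrite E1.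
  assert (E2 : / lam + h + (R + 2 * h) * em = / lam * (1 + Z)) by (unfold Z; field; lra).
  apply Rle_trans with (p * (1 + h) * (/ lam * (1 + Z))).
  { apply Rmult_le_compat_l; [apply Rmult_le_pos; lra|]. rewrite <- E2. lra. }
  rewrite !exp_plus, exp_ln, exp_ln by auto.
  pose proof (exp_ineq1_le (s / d)). pose proof (exp_ineq1_le h). pose proof (exp_ineq1_le Z).
  assert (Hsd : d + s = d * (1 + s / d)) by (field; lra).
  assert (/ lam <= d * exp (s / d)).
  { rewrite Hsd in Hinv. apply Rle_trans with (1 := Hinv). apply Rmult_le_compat_l; lra. }
  assert (0 < / lam) by (apply Rinv_0_lt_compat; auto).
  apply Rle_trans with (p * (exp h) * (d * exp (s / d) * exp Z)).
  - apply Rmult_le_compat.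
    + apply Rmult_le_pos; lra.
    + apply Rmult_le_pos; lra.
    + apply Rmult_le_compat_l; lra.
    + apply Rmult_le_compat; lra.
  - right; ring.
Qed.

Lemma Rpower_N_mono N x y : 1 <= N -> x <= y -> Rpower N x <= Rpower N y.
Proof. intros; apply Rle_Rpower; auto. Qed.

Theorem lemma3p2 :
  forall (beta B eps : R),
    0 <= beta -> 0 < B -> 0 < eps < 1/5 ->
    exists C : R, 0 < C /\
      forall (n : nat) (a b : R),
        C <= INR n ->
        Rpower (INR n) (- (2 * eps / 5)) < a -> a < b -> b <= B ->
        lebesgue_outer_le (2 * n + 1) (Zsubgraph beta n a b)
          (exp (INR n * Lfun beta a b
                + C * Rpower (INR n) (4/5 + eps) / (b - a))).
Proof.
  intros beta B eps Hbeta HB Heps.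
  set (K := 2 * B + 2).
  set (C0 := beta * B ^ 3 + 8 * B + 2 * B * B * (7 + K) + 3 * B + 2).
  assert (HC0 : 0 <= C0).
  { unfold C0, K. assert (0 <= beta * B ^ 3) by (apply Rmult_le_pos; [lra| apply pow_le; lra]). nra. }
  exists (32 + C0). split; [lra|].
  intros n a b HCn Ha Hab HbB.
  set (N := INR n) in *.
  assert (HN : 32 <= N) by lra.
  assert (Hn1 : (1 <= n)%nat) by (destruct n; [simpl in N; unfold N in HN; simpl in HN; lra| lia]).
  assert (HNp : 0 < N) by lra.
  set (e := Rpower N (- (1 / 5))).
  assert (He0 : 0 < e) by apply Rpower_pos.
  assert (Hp5 : 2 <= Rpower N (1 / 5)).
  { replace 2 with (Rpower 32 (1 / 5)).
    - apply Rle_Rpower_l; lra.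
    - replace 32 with (Rpower 2 (INR 5)) by (rewrite Rpower_pow by lra; simpl; ring).
      rewrite Rpower_mult. replace (INR 5 * (1 / 5)) with 1 by (simpl; field).
      apply Rpower_1; lra. }
  assert (He : e = / Rpower N (1 / 5)) by (unfold e; apply Rpower_Ropp).
  assert (He1 : e <= 1 / 2).
  { rewrite He. replace (1 / 2) with (/ 2) by field. apply Rinv_le_contravar; lra. }
  set (P := Rpower N (4 / 5 + eps)).
  assert (HNe : N * e = Rpower N (4 / 5)).
  { unfold e. rewrite <- (Rpower_1 N) at 1 by lra. rewrite <- Rpower_plus. f_equal; field. }
  assert (HP45 : Rpower N (4 / 5) <= P) by (apply Rpower_N_mono; lra).
  assert (HP1 : 1 <= P).
  { rewrite <- (Rpower_O N) by lra. apply Rpower_N_mono; lra. }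
  assert (Hsq : sqrt N = Rpower N (1 / 2)) by (rewrite <- Rpower_sqrt by lra; f_equal; field).
  assert (HsqP : sqrt N <= P) by (rewrite Hsq; apply Rpower_N_mono; lra).
  assert (Hsq1 : 1 <= sqrt N).
  { rewrite <- sqrt_1. apply sqrt_le_1_alt. lra. }
  assert (HsqN : sqrt N * sqrt N = N) by (apply sqrt_sqrt; lra).
  assert (Ha0 : 0 < a) by (pose proof (Rpower_pos N (- (2 * eps / 5))); lra).
  set (d := b - a).
  assert (Hd : 0 < d) by (unfold d; lra).
  assert (HdB : d <= B) by (unfold d; lra).
  assert (HBd : 1 <= B / d).
  { apply (Rmult_le_reg_r d); auto. replace (B / d * d) with B by (field; lra). lra. }
  assert (Hainv : / a <= Rpower N (2 * eps / 5)).
  { replace (Rpower N (2 * eps / 5)) with (/ Rpower N (- (2 * eps / 5))).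
    - left. apply Rinv_lt_contravar; auto. apply Rmult_lt_0_compat; auto. apply Rpower_pos.
    - rewrite Rpower_Ropp. apply Rinv_inv. }
  set (h := 1 / N). set (t := sqrt N).
  set (A := a * N * (1 - e)). set (R := b * N * (1 + e)).
  assert (HRA : R - A = N * (d + (a + b) * e)) by (unfold R, A, d; ring).
  assert (HRA0 : 0 < R - A) by (rewrite HRA; apply Rmult_lt_0_compat; [lra| nra]).
  set (lam := N / (R - A)).
  assert (Hlam : 0 < lam) by (unfold lam; apply Rdiv_lt_0_compat; lra).
  assert (Hinvlam : / lam = d + (a + b) * e) by (unfold lam; rewrite HRA; field; nra).
  assert (Hlamd : lam <= / d).
  { unfold lam. rewrite HRA. replace (N / (N * (d + (a + b) * e))) with (/ (d + (a + b) * e)) by (field; nra).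
    apply Rinv_le_contravar; nra. }
  assert (Hlamd' : lam <= 1 / d) by (unfold Rdiv; lra).
  assert (HK : 2 <= K) by (unfold K; lra).
  set (m := 2 * ln N + ln K).
  assert (HlnN : 0 <= ln N) by (rewrite <- ln_1; left; apply ln_increasing; lra).
  assert (HlnK : 0 <= ln K) by (rewrite <- ln_1; left; apply ln_increasing; lra).
  assert (Hm : 0 <= m) by (unfold m; lra).
  assert (HA : 0 < A) by (unfold A; apply Rmult_lt_0_compat; [nra|lra]).
  assert (HAA : A * A <= a ^ 2 * N ^ 2 * (1 - e)).
  { unfold A. replace (a * N * (1 - e) * (a * N * (1 - e))) with ((a * N) ^ 2 * ((1 - e) * (1 - e))) by ring.
    replace (a ^ 2 * N ^ 2 * (1 - e)) with ((a * N) ^ 2 * (1 - e)) by ring.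
    apply Rmult_le_compat_l; [apply pow2_ge_0| nra]. }
  assert (Hh : 0 < h) by (unfold h; apply Rdiv_lt_0_compat; lra).
  assert (Ht : 0 < t) by (unfold t; lra).
  pose proof (core beta n a b e h t lam m A eq_refl Hn1 Hbeta Hh Ht Hlam Hm HA ltac:(lra) HAA) as Hcore.
  fold N in Hcore. fold R in Hcore.
  eapply outer_mono; [exact Hcore|].
  set (X := PI * (h + h * h) * (1 / (1 - exp (- lam * h)) + (R / h + 2) * exp (- m))).
  set (Y := ln PI + ln d + 2 * B * e / d + h + (lam * h + lam * (R + 2 * h) * exp (- m))).
  assert (HXY : X <= exp Y).
  { unfold X, Y. apply X_bound; auto; try lra.
    - apply Rmult_le_pos; lra.
    - apply PI_RGT_0.
    - rewrite Hinvlam. assert ((a + b) * e <= 2 * B * e) by (apply Rmult_le_compat_r; lra). lra. }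
  assert (HX0 : 0 <= X).
  { apply Rle_trans with (PI * (h + h * h) * (1 / (1 - exp (- lam * h)))).
    - assert (0 <= h * h) by nra.
      apply Rmult_le_pos. pose proof PI_RGT_0. apply Rmult_le_pos; lra.
      assert (exp (- lam * h) < 1). { rewrite <- exp_0. apply exp_increasing. nra. }
      unfold Rdiv. rewrite Rmult_1_l. left; apply Rinv_0_lt_compat; lra.
    - unfold X. assert (0 <= h * h) by nra. apply Rmult_le_compat_l. pose proof PI_RGT_0. apply Rmult_le_pos; lra.
      assert (0 <= (R / h + 2) * exp (- m)).
      { apply Rmult_le_pos; [|left; apply exp_pos]. unfold Rdiv. 
        assert (0 <= R) by (unfold R; apply Rmult_le_pos; [apply Rmult_le_pos|]; lra).
        assert (0 < / h) by (apply Rinv_0_lt_compat; lra).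
        assert (0 <= R * / h) by (apply Rmult_le_pos; lra). lra. }
      lra. }
  assert (HXn : X ^ n <= exp (Y * N)).
  { unfold N. rewrite exp_INR_pow. apply pow_incr. lra. }
  apply Rle_trans with (exp (beta / N * (a ^ 2 * N ^ 2 * (1 + e))) *
     exp (lam * (R - A + (t + h) * R / A) + m * (R / t)) * exp (Y * N)).
  { apply Rmult_le_compat_l; [apply Rmult_le_pos; left; apply exp_pos| exact HXn]. }
  rewrite <- !exp_plus. apply exp_le_exp'.
  unfold Lfun, Y. fold d.
  assert (Hh1 : h <= 1) by (unfold h; apply (Rmult_le_reg_r N); auto; replace (1 / N * N) with 1 by (field; lra); lra).
  assert (HNh : N * h = 1) by (unfold h; field; lra).
  assert (HPd : 0 <= P / d) by (apply divnn; lra).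
  assert (Hinvd : 0 < / d) by (apply Rinv_0_lt_compat; lra).
  assert (HBP : 0 <= B * P) by nra.
  assert (HR0 : 0 <= R) by (unfold R; apply Rmult_le_pos; [apply Rmult_le_pos|]; lra).
  assert (HR2g : R <= 2 * B * N).
  { unfold R. assert (b * (1 + e) <= 2 * B) by nra. nra. }
  assert (T1 : beta * a ^ 2 * (N * e) <= beta * B ^ 3 * P / d).
  { assert (a ^ 2 * (N * e) <= B ^ 2 * P).
    { apply Rmult_le_compat; [apply pow2_ge_0| rewrite HNe; left; apply Rpower_pos | | rewrite HNe; lra]. simpl. nra. }
    assert (B ^ 2 * P <= B ^ 2 * P * (B / d)).
    { rewrite <- (Rmult_1_r (B ^ 2 * P)) at 1. apply Rmult_le_compat_l; [|lra].
      apply Rmult_le_pos; [apply pow2_ge_0|lra]. }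
    replace (beta * B ^ 3 * P / d) with (beta * (B ^ 2 * P * (B / d))) by (field; lra).
    replace (beta * a ^ 2 * (N * e)) with (beta * (a ^ 2 * (N * e))) by ring.
    apply Rmult_le_compat_l; lra. }
  assert (T2 : lam * ((t + h) * R / A) <= 8 * B * P / d).
  { assert (Hth : t + h <= 2 * t) by (unfold t; lra).
    assert (HR2 : R <= 2 * B * N).
    { unfold R. assert (b * (1 + e) <= 2 * B) by nra. nra. }
    assert (HaN : 0 < a * N) by nra.
    assert (HA2 : a * N / 2 <= A) by (unfold A; nra).
    assert (Q1 : (t + h) * R / A <= 8 * B * t * / a).
    { apply (Rmult_le_reg_r A); auto. replace ((t + h) * R / A * A) with ((t + h) * R) by (field; lra).
      assert (0 < / a) by (apply Rinv_0_lt_compat; lra).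
      assert (8 * B * t * / a * (a * N / 2) = 4 * B * t * N) by (field; lra).
      assert (8 * B * t * / a * (a * N / 2) <= 8 * B * t * / a * A).
      { apply Rmult_le_compat_l; auto. assert (0 <= 8 * B * t) by nra. nra. }
      assert ((t + h) * R <= 2 * t * (2 * B * N)).
      { apply Rmult_le_compat; lra. }
      nra. }
    assert (Q2 : 8 * B * t * / a <= 8 * B * P).
    { assert (t * / a <= P).
      { apply Rle_trans with (t * Rpower N (2 * eps / 5)).
        - apply Rmult_le_compat_l; lra.
        - unfold t. rewrite Hsq, <- Rpower_plus. apply Rpower_N_mono; lra. }
      nra. }
    assert (0 <= (t + h) * R / A).
    { unfold Rdiv. apply Rmult_le_pos; [apply Rmult_le_pos; [lra| lra]| left; apply Rinv_0_lt_compat; lra]. }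
    apply Rle_trans with (/ d * (8 * B * P)).
    - apply Rmult_le_compat; lra.
    - right; field; lra. }
  assert (T3 : m * (R / t) <= 2 * B * B * (7 + K) * P / d).
  { set (Q3 := Rpower N (3 / 10)).
    assert (HQ3 : ln N <= 10 / 3 * Q3).
    { pose proof (ln_le_sub1 Q3 (Rpower_pos _ _)).
      assert (E : ln Q3 = 3 / 10 * ln N) by (unfold Q3; apply ln_Rpower). rewrite E in H.
      assert (0 < Q3) by apply Rpower_pos. lra. }
    assert (HlK : ln K <= K) by (pose proof (ln_le_sub1 K ltac:(lra)); lra).
    assert (Hm2 : m <= 20 / 3 * Q3 + K) by (unfold m; lra).
    assert (HRt : R / t <= 2 * B * t).
    { apply (Rmult_le_reg_r t); auto. replace (R / t * t) with R by (field; lra).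
      unfold t. rewrite Rmult_assoc, HsqN. lra. }
    assert (HtQ : t * Q3 <= P).
    { unfold t, Q3. rewrite Hsq, <- Rpower_plus. apply Rpower_N_mono; lra. }
    assert (HQ30 : 0 < Q3) by apply Rpower_pos.
    assert (m * (R / t) <= (20 / 3 * Q3 + K) * (2 * B * t)).
    { apply Rmult_le_compat; auto. unfold Rdiv. apply Rmult_le_pos; [lra| left; apply Rinv_0_lt_compat; lra]. }
    assert ((20 / 3 * Q3 + K) * (2 * B * t) <= 2 * B * (7 + K) * P).
    { replace ((20 / 3 * Q3 + K) * (2 * B * t)) with (2 * B * (20 / 3 * (t * Q3) + K * t)) by ring.
      replace (2 * B * (7 + K) * P) with (2 * B * ((7 + K) * P)) by ring.
      apply Rmult_le_compat_l; [lra|].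
      assert (K * t <= K * P) by (apply Rmult_le_compat_l; unfold t; lra). lra. }
    assert (2 * B * (7 + K) * P <= 2 * B * (7 + K) * P * (B / d)).
    { rewrite <- (Rmult_1_r (2 * B * (7 + K) * P)) at 1. apply Rmult_le_compat_l; [|lra].
      assert (0 <= 2 * B * (7 + K)) by nra. nra. }
    replace (2 * B * B * (7 + K) * P / d) with (2 * B * (7 + K) * P * (B / d)) by (field; lra).
    lra. }
  assert (T4 : N * (2 * B * e / d) <= 2 * B * P / d).
  { replace (N * (2 * B * e / d)) with (2 * B * (N * e) * / d) by (field; lra).
    unfold Rdiv. apply Rmult_le_compat_r; [lra|]. nra. }
  assert (T5 : 1 <= B * P / d).
  { replace (B * P / d) with (P * (B / d)) by (field; lra). nra. }
  assert (T6 : N * (lam * h) <= P / d).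
  { replace (N * (lam * h)) with (lam * (N * h)) by ring. rewrite HNh, Rmult_1_r. unfold Rdiv.
    apply Rle_trans with (/ d); auto. nra. }
  assert (T7 : N * (lam * (R + 2 * h) * exp (- m)) <= P / d).
  { assert (Hem : exp (- m) = / (N * N * K)).
    { unfold m. rewrite exp_Ropp, exp_plus. replace (2 * ln N) with (ln N + ln N) by ring.
      rewrite exp_plus, !exp_ln by lra. reflexivity. }
    assert (HR2 : R + 2 * h <= K * N).
    { unfold K, R. assert (b * (1 + e) <= 2 * B) by nra. nra. }
    rewrite Hem.
    apply Rle_trans with (N * (lam * (K * N) * / (N * N * K))).
    - apply Rmult_le_compat_l; [lra|]. apply Rmult_le_compat_r; [left; apply Rinv_0_lt_compat; nra|].
      apply Rmult_le_compat_l; lra.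
    - replace (N * (lam * (K * N) * / (N * N * K))) with lam by (field; lra).
      unfold Rdiv. apply Rle_trans with (/ d); auto. nra. }
  assert (Hlam1 : lam * (R - A) = N) by (unfold lam; field; lra).
  assert (E0 : beta / N * (a ^ 2 * N ^ 2 * (1 + e)) = beta * a ^ 2 * N + beta * a ^ 2 * (N * e))
    by (field; lra).
  rewrite E0.
  assert (E1 : lam * (R - A + (t + h) * R / A) = N + lam * ((t + h) * R / A)).
  { rewrite <- Hlam1. field. lra. }
  rewrite E1.
  assert (E2 : (ln PI + ln d + 2 * B * e / d + h + (lam * h + lam * (R + 2 * h) * exp (- m))) * N =
     N * ln PI + N * ln d + N * (2 * B * e / d) + N * h + N * (lam * h) + N * (lam * (R + 2 * h) * exp (- m))) by ring.
  rewrite E2.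
  assert (E3 : (32 + C0) * P / d = 32 * (P / d) + (beta * B ^ 3 * P / d + 8 * B * P / d + 2 * B * B * (7 + K) * P / d
      + 3 * (B * P / d) + 2 * (P / d))) by (unfold C0; field; lra).
  rewrite E3.
  assert (2 * B * P / d <= 2 * (B * P / d)) by (right; field; lra).
  lra.
Qed.
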